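(* Let $1\le p<\infty$ and let $Q$ be a finite set of points in the closed upper half-plane $\{y\ge0\}$ with pairwise distinct $x$-coordinates. For $t\in\mathbb{R}$ and $q\in Q$ write $d(t,q)=\|(t,0)-q\|_p$, and say that $q$ is the farthest point of $Q$ from $t$ if $d(t,q)>d(t,q')$ for all $q'\in Q\setminus\{q\}$. Then: (1) for each $q\in Q$, the set $\{t\in\mathbb{R}: q \text{ is the farthest point of } Q \text{ from } t\}$ is either empty or an interval (connected); and (2) if $t<t'$, $q$ is the farthest point of $Q$ from $t$, $q'$ is the farthest point of $Q$ from $t'$, and $q\neq q'$, then the $x$-coordinate of $q$ is strictly greater than the $x$-coordinate of $q'$. Consequently, the intervals into which the farthest-point Voronoi diagram of $Q$ partitions the $x$-axis, listed from left to right as $I_1,\dots,I_\sigma$, have associated farthest points whose $x$-coordinates are strictly decreasing.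
   Context: $\|\cdot\|_p$ denotes the $L_p$ norm on $\mathbb{R}^2$. *)

(* Defs.v *)
From Stdlib Require Import Reals List.
Open Scope R_scope.

(* a^e for a >= 0, with the convention 0^e = 0 (e > 0).
   Rpower alone would give Rpower 0 e = 1, hence the guard. *)
Definition rpow (a e : R) : R := if Rle_dec a 0 then 0 else Rpower a e.

Definition lp_norm (p : R) (v : R * R) : R :=
  rpow (rpow (Rabs (fst v)) p + rpow (Rabs (snd v)) p) (/ p).

Definition dist_p (p t : R) (q : R * R) : R :=
  lp_norm p (t - fst q, 0 - snd q).

Definition farthest (p : R) (Q : list (R * R)) (t : R) (q : R * R) : Prop :=
  In q Q /\ forall q', In q' Q -> q' <> q -> dist_p p t q > dist_p p t q'.

(* Main.v *)
Require Import Defs.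
From Stdlib Require Import Reals List Lra.
Open Scope R_scope.

Lemma rpow_pos a e : 0 < a -> rpow a e = Rpower a e.
Proof. intros H; unfold rpow; destruct (Rle_dec a 0); [lra|reflexivity]. Qed.

Lemma rpow_le0 a e : a <= 0 -> rpow a e = 0.
Proof. intros H; unfold rpow; destruct (Rle_dec a 0); [reflexivity|lra]. Qed.

Lemma rpow_ge0 a e : 0 <= rpow a e.
Proof.
  unfold rpow; destruct (Rle_dec a 0); [lra|].
  unfold Rpower; left; apply exp_pos.
Qed.

Lemma rpow_le a b e : 0 < e -> 0 <= a -> a <= b -> rpow a e <= rpow b e.
Proof.
  intros He Ha Hab.
  destruct (Req_dec a 0) as [->|Ha0].
  - rewrite rpow_le0 by lra. apply rpow_ge0.
  - rewrite !rpow_pos by lra. apply Rle_Rpower_l; lra.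
Qed.

Lemma rpow_lt a b e : 0 < e -> 0 <= a -> a < b -> rpow a e < rpow b e.
Proof.
  intros He Ha Hab.
  destruct (Req_dec a 0) as [->|Ha0].
  - rewrite rpow_le0 by lra. rewrite rpow_pos by lra. unfold Rpower; apply exp_pos.
  - rewrite !rpow_pos by lra. apply Rlt_Rpower_l; lra.
Qed.

Section K.
Variable p : R.
Hypothesis Hp : 1 <= p.

Let k x := rpow x p.

Lemma Rpower_split y : 0 < y -> Rpower y p = y * Rpower y (p - 1).
Proof.
  intros Hy. replace p with (1 + (p - 1)) at 1 by ring.
  rewrite Rpower_plus, Rpower_1 by lra. reflexivity.
Qed.

Lemma core_no x y d : 0 < x -> 0 < d -> x + d <= y ->
  k (x + d) - k x <= k (y + d) - k y.
Proof.
  intros Hx Hd Hxy. unfold k.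
  rewrite !rpow_pos by lra.
  set (f' := fun z => p * Rpower z (p - 1)).
  destruct (MVT_cor2 (fun z => Rpower z p) f' x (x + d)) as [c1 [E1 H1]]; [lra| |].
  { intros c Hc. apply derivable_pt_lim_power. lra. }
  destruct (MVT_cor2 (fun z => Rpower z p) f' y (y + d)) as [c2 [E2 H2]]; [lra| |].
  { intros c Hc. apply derivable_pt_lim_power. lra. }
  simpl in E1, E2. rewrite E1, E2. unfold f'.
  replace (x + d - x) with d by ring. replace (y + d - y) with d by ring.
  apply Rmult_le_compat_r; [lra|]. apply Rmult_le_compat_l; [lra|].
  apply Rle_Rpower_l; lra.
Qed.

Lemma incr x y d : 0 <= x -> x <= y -> 0 <= d ->
  k (x + d) - k x <= k (y + d) - k y.
Proof.
  intros Hx Hxy Hd.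
  destruct (Req_dec d 0) as [->|Hd0].
  { rewrite !Rplus_0_r; lra. }
  destruct (Req_dec x 0) as [->|Hx0].
  - (* superadditivity *)
    rewrite Rplus_0_l. unfold k. rewrite (rpow_le0 0) by lra.
    destruct (Req_dec y 0) as [->|Hy0].
    { rewrite Rplus_0_l, (rpow_le0 0) by lra. lra. }
    rewrite !rpow_pos by lra.
    rewrite (Rpower_split d), (Rpower_split y), (Rpower_split (y + d)) by lra.
    assert (Rpower d (p - 1) <= Rpower (y + d) (p - 1)) by (apply Rle_Rpower_l; lra).
    assert (Rpower y (p - 1) <= Rpower (y + d) (p - 1)) by (apply Rle_Rpower_l; lra).
    nra.
  - destruct (Rle_dec (x + d) y).
    + apply core_no; lra.
    + destruct (Req_dec x y) as [<-|Hne]; [lra|].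
      assert (k (x + (y - x)) - k x <= k ((x + d) + (y - x)) - k (x + d))
        by (apply core_no; lra).
      replace (x + (y - x)) with y in H by ring.
      replace (x + d + (y - x)) with (y + d) in H by ring. lra.
Qed.

Let h s := k (Rabs s).
Let D c s := h (s + c) - h s.

Lemma k_mono a b : 0 <= a -> a <= b -> k a <= k b.
Proof. intros; unfold k; apply rpow_le; lra. Qed.

Lemma D_mono c s1 s2 : 0 <= c -> s1 <= s2 -> D c s1 <= D c s2.
Proof.
  intros Hc Hs. unfold D, h.
  assert (R1 : forall a b, 0 <= a -> a <= b ->
    k (Rabs (a + c)) - k (Rabs a) <= k (Rabs (b + c)) - k (Rabs b)).
  { intros a b Ha Hab. rewrite !Rabs_right by lra. apply incr; lra. }
  assert (R3 : forall a b, a <= b -> b <= -c ->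
    k (Rabs (a + c)) - k (Rabs a) <= k (Rabs (b + c)) - k (Rabs b)).
  { intros a b Ha Hab. rewrite !Rabs_left1 by lra.
    assert (H := incr (- b - c) (- a - c) c).
    replace (- b - c + c) with (- b) in H by ring.
    replace (- a - c + c) with (- a) in H by ring.
    replace (- (a + c)) with (- a - c) by ring.
    replace (- (b + c)) with (- b - c) by ring.
    assert (k (-b) - k (-b - c) <= k (-a) - k (-a - c)) by (apply H; lra). lra. }
  assert (R2 : forall a b, -c <= a -> a <= b -> b <= 0 ->
    k (Rabs (a + c)) - k (Rabs a) <= k (Rabs (b + c)) - k (Rabs b)).
  { intros a b H1 H2 H3. rewrite (Rabs_right (a + c)), (Rabs_right (b + c)) by lra.
    rewrite (Rabs_left1 a), (Rabs_left1 b) by lra.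
    assert (k (a + c) <= k (b + c)) by (apply k_mono; lra).
    assert (k (- b) <= k (- a)) by (apply k_mono; lra). lra. }
  destruct (Rle_dec s2 (-c)).
  - apply R3; lra.
  - destruct (Rle_dec s2 0).
    + destruct (Rle_dec (-c) s1).
      * apply R2; lra.
      * eapply Rle_trans; [apply (R3 s1 (-c)); lra|]. apply R2; lra.
    + destruct (Rle_dec 0 s1).
      * apply R1; lra.
      * destruct (Rle_dec (-c) s1).
        -- eapply Rle_trans; [apply (R2 s1 0); lra|]. apply R1; lra.
        -- eapply Rle_trans; [apply (R3 s1 (-c)); lra|].
           eapply Rle_trans; [apply (R2 (-c) 0); lra|]. apply R1; lra.
Qed.

Definition S t (q : R * R) := rpow (Rabs (t - fst q)) p + rpow (Rabs (0 - snd q)) p.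

Lemma S_diff_mono (q q' : R * R) t1 t2 : fst q' < fst q -> t1 <= t2 ->
  S t2 q - S t2 q' <= S t1 q - S t1 q'.
Proof.
  intros Ha Ht. unfold S.
  assert (H := D_mono (fst q - fst q') (t1 - fst q) (t2 - fst q)).
  unfold D, h, k in H.
  replace (t1 - fst q + (fst q - fst q')) with (t1 - fst q') in H by ring.
  replace (t2 - fst q + (fst q - fst q')) with (t2 - fst q') in H by ring.
  assert (rpow (Rabs (t2 - fst q')) p - rpow (Rabs (t2 - fst q)) p >=
          rpow (Rabs (t1 - fst q')) p - rpow (Rabs (t1 - fst q)) p) by (apply Rle_ge, H; lra).
  lra.
Qed.

Lemma dist_S t q : dist_p p t q = rpow (S t q) (/ p).
Proof. reflexivity. Qed.

Lemma S_ge0 t q : 0 <= S t q.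
Proof. unfold S. pose proof (rpow_ge0 (Rabs (t - fst q)) p). pose proof (rpow_ge0 (Rabs (0 - snd q)) p). lra. Qed.

Lemma dist_gt t q q' : dist_p p t q > dist_p p t q' <-> S t q > S t q'.
Proof.
  rewrite !dist_S. assert (He : 0 < / p) by (apply Rinv_0_lt_compat; lra).
  split; intros H.
  - destruct (Rle_dec (S t q) (S t q')) as [Hl|Hl]; [|lra].
    pose proof (rpow_le _ _ _ He (S_ge0 t q) Hl). lra.
  - apply rpow_lt; auto. apply S_ge0.
Qed.

End K.

Lemma fst_neq (Q : list (R * R)) q q' : NoDup (map fst Q) -> In q Q -> In q' Q -> q <> q' ->
  fst q <> fst q'.
Proof.
  induction Q as [|x l IH]; simpl; [tauto|].
  intros Hnd Hq Hq' Hne. inversion Hnd as [|? ? Hnin Hnd']; subst.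
  destruct Hq as [<-|Hq]; destruct Hq' as [<-|Hq'].
  - congruence.
  - intros E. apply Hnin. rewrite E. apply in_map; auto.
  - intros E. apply Hnin. rewrite <- E. apply in_map; auto.
  - apply IH; auto.
Qed.

Theorem lemma2 (p : R) (Q : list (R * R)) :
  1 <= p ->
  (forall q, In q Q -> 0 <= snd q) ->
  NoDup (map fst Q) ->
  (* (1) the farthest-point region of each q on the x-axis is convex
         (hence empty or an interval) *)
  (forall q t1 t2 t, farthest p Q t1 q -> farthest p Q t2 q ->
     t1 <= t <= t2 -> farthest p Q t q) /\
  (* (2) regions appear in strictly decreasing order of x-coordinate *)
  (forall q q' t t', t < t' -> farthest p Q t q -> farthest p Q t' q' ->
     q <> q' -> fst q > fst q').
Proof.
  intros Hp _ Hnd. split.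
  - intros q t1 t2 t [Hq H1] [_ H2] Ht. split; auto.
    intros q' Hq' Hne. apply (dist_gt p Hp).
    specialize (H1 q' Hq' Hne). specialize (H2 q' Hq' Hne).
    apply (dist_gt p Hp) in H1. apply (dist_gt p Hp) in H2.
    assert (Hf : fst q' <> fst q) by (apply (fst_neq Q); auto).
    destruct (Rlt_or_le (fst q') (fst q)) as [Hl|Hl].
    + pose proof (S_diff_mono p Hp q q' t t2 Hl (proj2 Ht)). lra.
    + assert (Hl' : fst q < fst q') by lra.
      pose proof (S_diff_mono p Hp q' q t1 t Hl' (proj1 Ht)). lra.
  - intros q q' t t' Htt [Hq H1] [Hq' H2] Hne.
    assert (Hf : fst q <> fst q') by (apply (fst_neq Q); auto).
    destruct (Rlt_or_le (fst q) (fst q')) as [Hl|Hl]; [|lra].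
    exfalso.
    specialize (H1 q' Hq' (not_eq_sym Hne)). specialize (H2 q Hq Hne).
    apply (dist_gt p Hp) in H1. apply (dist_gt p Hp) in H2.
    pose proof (S_diff_mono p Hp q' q t t' Hl (Rlt_le _ _ Htt)). lra.
Qed.
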